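(* Let $G$ be a graph on $n$ vertices of tree-width $w$, and suppose that its complement $\overline{G}$ is closed under the Bondy–Chvátal closure, i.e. for every two distinct vertices $u,v$ that are non-adjacent in $\overline{G}$ we have $\deg_{\overline{G}}(u)+\deg_{\overline{G}}(v)<n$. Then the neighborhood diversity of $\overline{G}$ is at most $2^{k}+k$, where $k=2(w^2+w)$.
   Context: All graphs are finite and simple. The complement $\overline{G}$ of a graph $G=(V,E)$ is the graph $(V,\binom{V}{2}\setminus E)$. Tree-width: a tree decomposition of $G$ is a pair $(T,\{X_i\}_{i\in I})$ with $T=(I,F)$ a tree and bags $X_i\subseteq V(G)$ such that every vertex lies in some bag, every edge has both endpoints in some bag, and for each vertex $v$ the nodes whose bags contain $v$ induce a subtree of $T$; its width is $\max_i|X_i|-1$, and the tree-width of $G$ is the minimum width over all tree decompositions. The neighborhood diversity of a graph $H$ is the minimum size of a partition of $V(H)$ into classes such that any two vertices $v,v'$ in the same class satisfy $N(v)\setminus\{v'\}=N(v')\setminus\{v\}$. *)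

(* Defs.v *)
From mathcomp Require Import all_boot.
Set Implicit Arguments. Unset Strict Implicit. Unset Printing Implicit Defensive.

Definition simple_graph (T : finType) (e : rel T) : Prop :=
  symmetric e /\ irreflexive e.

Definition compl_graph (T : finType) (e : rel T) : rel T :=
  fun x y => (x != y) && ~~ e x y.

Definition deg (T : finType) (e : rel T) (v : T) : nat := #|[set x | e v x]|.

(* A tree on the node set 'I_m (m > 0): symmetric irreflexive, connected,
   with exactly m - 1 (undirected) edges, i.e. 2(m-1) ordered adjacent pairs. *)
Definition is_tree (m : nat) (f : rel 'I_m) : Prop :=
  [/\ 0 < m, symmetric f, irreflexive f,
      (forall i j, connect f i j)
    & #|[set p : 'I_m * 'I_m | f p.1 p.2]| = (m - 1).*2].

Definition tree_decomposition (T : finType) (e : rel T)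
    (m : nat) (f : rel 'I_m) (B : 'I_m -> {set T}) : Prop :=
  [/\ is_tree f,
      (forall v, exists i, v \in B i),
      (forall u v, e u v -> exists i, (u \in B i) && (v \in B i))
    & (forall v i j, v \in B i -> v \in B j ->
         connect (fun a b => [&& f a b, v \in B a & v \in B b]) i j)].

Definition td_width (T : finType) (m : nat) (B : 'I_m -> {set T}) : nat :=
  (\max_(i < m) #|B i|).-1.

Definition has_td_of_width (T : finType) (e : rel T) (w : nat) : Prop :=
  exists m (f : rel 'I_m) (B : 'I_m -> {set T}),
    tree_decomposition e f B /\ td_width B = w.

Definition treewidth_eq (T : finType) (e : rel T) (w : nat) : Prop :=
  has_td_of_width e w /\ (forall w', has_td_of_width e w' -> w <= w').

Definition nd_partition (T : finType) (e : rel T) (k : nat) (c : T -> 'I_k) : Prop :=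
  forall v v', c v = c v' ->
    [set x | e v x] :\ v' = [set x | e v' x] :\ v.

Definition nd_eq (T : finType) (e : rel T) (d : nat) : Prop :=
  (exists c : T -> 'I_d, nd_partition e c /\ forall t, exists v, c v = t) /\
  (forall k (c : T -> 'I_k), nd_partition e c -> d <= k).

(* Main.v *)
Require Import Defs.
From mathcomp Require Import all_boot zify.
Set Implicit Arguments. Unset Strict Implicit. Unset Printing Implicit Defensive.

Lemma path_exit (T : Type) (g : rel T) (D : pred T) (q : seq T) (x : T) :
  path g x q -> D x -> ~~ D (last x q) -> exists y z, [&& g y z, D y & ~~ D z].
Proof.
elim: q x => [|z q IH] x /=; first by move=> _ ->.
case/andP=> gxz pq Dx Dl.
case Dz: (D z); first exact: IH pq Dz Dl.
by exists x, z; rewrite gxz Dx Dz.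
Qed.

Section Tree.
Variables (m : nat) (f : rel 'I_m) (r : 'I_m).
Hypothesis ftree : is_tree f.

Fixpoint reach k : {set 'I_m} :=
  if k is k'.+1 then reach k' :|: [set j | [exists i in reach k', f i j]]
  else [set r].

Lemma reach_mono k k' : k <= k' -> reach k \subset reach k'.
Proof.
move=> /subnK <-; elim: (k' - k) => [|n IH] //.
by apply: subset_trans IH _; rewrite addSn /= subsetUl.
Qed.

Lemma reach_step k a b : a \in reach k -> f a b -> b \in reach k.+1.
Proof.
by move=> ak fab /=; rewrite in_setU; apply/orP; right; rewrite inE; apply/existsP; exists a; rewrite ak.
Qed.

Lemma reach_all i : exists k, i \in reach k.
Proof.
case: ftree => _ _ _ conn _.
have /connectP [q pq ->] := conn r i.
suff : forall q x k, path f x q -> x \in reach k -> last x q \in reach (k + size q).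
  by move=> H; exists (0 + size q); apply: H pq _; rewrite /= inE.
elim=> [|z q' IH] x k /=; first by rewrite addn0.
case/andP=> fxz pq' xk; rewrite addnS -addSn; apply: IH pq' _.
exact: reach_step xk fxz.
Qed.

Definition depth i := ex_minn (reach_all i).

Lemma depth_spec i k : (i \in reach k) = (depth i <= k).
Proof.
rewrite /depth; case: ex_minnP => n Hn Hmin.
apply/idP/idP; first exact: Hmin.
by move=> le; apply: (subsetP (reach_mono le)).
Qed.

Lemma depth0 i : (depth i == 0) = (i == r).
Proof. by rewrite -leqn0 -depth_spec /= inE. Qed.

Lemma depth_r : depth r = 0.
Proof. by apply/eqP; rewrite depth0. Qed.

Lemma depth_edge a b : f a b -> depth b <= (depth a).+1.
Proof. by move=> fab; rewrite -depth_spec; apply: reach_step fab; rewrite depth_spec. Qed.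

Lemma parent_ex i : i != r -> exists j, f i j && ((depth j).+1 == depth i).
Proof.
case: ftree => _ fsym _ _ _.
rewrite -depth0; case Hd: (depth i) => [|k] // _.
have : i \in reach k.+1 by rewrite depth_spec Hd.
rewrite /= in_setU depth_spec Hd ltnn /= inE => /existsP [j /andP [jk fji]].
exists j; rewrite fsym fji /=.
have := depth_edge fji; rewrite Hd ltnS => le.
by rewrite eqSS eqn_leq -depth_spec jk le.
Qed.

Definition par i :=
  if [pick j | f i j && ((depth j).+1 == depth i)] is Some j then j else r.

Lemma par_spec i : i != r -> f i (par i) /\ (depth (par i)).+1 = depth i.
Proof.
move=> ir; rewrite /par; case: pickP => [j /andP [? /eqP ?] //|H].
by have [j Hj] := parent_ex ir; have := H j; rewrite Hj.
Qed.

Lemma par_r : par r = r.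
Proof.
rewrite /par; case: pickP => [j /andP [_ /eqP]|//].
by rewrite depth_r.
Qed.

Lemma depth_par i : depth (par i) = (depth i).-1.
Proof.
case: (eqVneq i r) => [->|ir]; first by rewrite par_r depth_r.
by have [_ <-] := par_spec ir.
Qed.

Lemma edge_par a b : f a b -> (a != r /\ b = par a) \/ (b != r /\ a = par b).
Proof.
case: ftree => _ fsym firr _ Ecard fab.
pose E := [set p : 'I_m * 'I_m | f p.1 p.2].
pose A := [set (i, par i) | i in [set~ r]].
pose B := [set (par i, i) | i in [set~ r]].
have AB : A :&: B = set0.
  apply/setP=> [[x y]]; rewrite !inE; apply/negP => /andP [].
  case/imsetP=> i; rewrite !inE => ir [-> ->].
  case/imsetP=> j; rewrite !inE => jr [ij pj].
  have [_ d1] := par_spec ir; have [_ d2] := par_spec jr.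
  move: d1 d2; rewrite -ij -pj => d1 d2; lia.
have cA : #|A| = m.-1.
  by rewrite card_imset ?cardsC1 ?card_ord // => x y [].
have cB : #|B| = m.-1.
  by rewrite card_imset ?cardsC1 ?card_ord // => x y [].
have sub : A :|: B \subset E.
  apply/subsetP=> p; rewrite in_setU inE => /orP [] /imsetP [i]; rewrite !inE => ir ->/=;
    have [fi _] := par_spec ir => //; by rewrite fsym.
have eqE : A :|: B = E.
  apply/eqP; rewrite eqEcard sub /= cardsU AB cards0 subn0 cA cB Ecard; lia.
have : (a, b) \in E by rewrite inE.
rewrite -eqE in_setU => /orP [] /imsetP [i]; rewrite !inE => ir [-> ->]; by [left | right].
Qed.

Definition desc x i := (depth i <= depth x) && (iter (depth x - depth i) par x == i).

Lemma desc_refl x : desc x x.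
Proof. by rewrite /desc leqnn subnn /= eqxx. Qed.

Lemma desc_par x i : desc x i -> x != i -> desc (par x) i.
Proof.
case/andP=> le /eqP it xi.
have lt : depth i < depth x.
  rewrite ltn_neqAle le andbT; apply/negP=> /eqP E; move: it; rewrite E subnn /= => E'.
  by rewrite E' eqxx in xi.
rewrite /desc depth_par; apply/andP; split; first lia.
move: it; have -> : depth x - depth i = (( depth x).-1 - depth i).+1 by lia.
by rewrite iterSr => ->.
Qed.

Lemma desc_child z i : z != r -> desc (par z) i -> desc z i.
Proof.
move=> zr; have [_ d] := par_spec zr.
case/andP=> le /eqP it; rewrite /desc -d; apply/andP; split; first lia.
by rewrite subSn // iterSr it.
Qed.

Lemma depth_iter j x : depth (iter j par x) = depth x - j.
Proof. by elim: j => [|j IH]; rewrite ?subn0 // iterS depth_par IH subnS. Qed.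

Section Sub.
Variable P : pred 'I_m.
Hypothesis conn : forall a b, P a -> P b ->
  connect (fun a b => [&& f a b, P a & P b]) a b.

Lemma keyK i t : P i -> P t -> ~~ desc t i -> i != r /\ P (par i).
Proof.
move=> Pi Pt nd.
have /connectP [q pq tq] := conn Pi Pt.
have nDl : ~~ desc (last i q) i by rewrite -tq.
have [y [z /and3P [/and3P [fyz Py Pz] Dy nDz]]] :=
  path_exit (D := fun x => desc x i) pq (desc_refl i) nDl.
case: (edge_par fyz) => [[yr zp]|[zr yp]].
- case: (eqVneq y i) => [yi|yi].
    by rewrite -yi; split => //; rewrite -zp.
  by have := desc_par Dy yi; rewrite -zp (negbTE nDz).
- by rewrite yp in Dy; rewrite (desc_child zr Dy) in nDz.
Qed.

Definition top := odflt r [pick i | P i && [forall j, P j ==> (depth i <= depth j)]].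

Lemma top_spec : (exists i, P i) -> P top /\ forall j, P j -> depth top <= depth j.
Proof.
case=> i0 Pi0; rewrite /top; case: pickP => [t /andP [Pt /forallP H]|H] /=.
  by split => // j Pj; apply: (implyP (H j)).
exfalso; case: (arg_minnP depth Pi0) => t Pt Hmin.
have := H t; rewrite Pt /=; move/negP; apply; apply/forallP => j; apply/implyP; exact: Hmin.
Qed.

Lemma top_desc : (exists i, P i) -> forall x, P x -> desc x top.
Proof.
move=> ex; have [Pt Hmin] := top_spec ex.
suff H : forall n x, depth x <= n -> P x -> desc x top by move=> x; apply: H (leqnn _).
elim=> [|n IH] x dx Px.
  have := Hmin x Px; move: dx; rewrite !leqn0 => /eqP d0; rewrite d0 leqn0 => /eqP dt.
  case: (eqVneq x top) => [->|xt]; first exact: desc_refl.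
  have := @keyK x top Px Pt; rewrite /desc dt d0 subnn /= eq_sym (negbTE xt) /=.
  by case=> // /negbTE; rewrite -depth0 d0.
case: (eqVneq x top) => [->|xt]; first exact: desc_refl.
have nd : ~~ desc top x.
  rewrite /desc; apply/negP => /andP [le /eqP E].
  have := Hmin x Px => le2; have e: depth x = depth top by lia.
  by move: E; rewrite e subnn /= => E; rewrite E eqxx in xt.
have [xr Pp] := keyK Px Pt nd.
apply: desc_child xr _; apply: IH Pp; rewrite depth_par; lia.
Qed.

Lemma chain : (exists i, P i) -> forall x, P x ->
   forall j, j <= depth x - depth top -> P (iter j par x).
Proof.
move=> ex; have [Pt Hmin] := top_spec ex.
move=> x Px; elim=> [|j IH] //= lt.
have Py := IH (ltnW lt).
have nd : ~~ desc top (iter j par x).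
  rewrite /desc depth_iter; apply/negP => /andP [le _]; lia.
by have [_ ] := keyK Py Pt nd.
Qed.

End Sub.
End Tree.


Section Decomp.
Variables (T : finType) (e : rel T) (m : nat) (f : rel 'I_m) (B : 'I_m -> {set T}).
Hypothesis td : tree_decomposition e f B.

Lemma td_tree : is_tree f. Proof. by case: td. Qed.
Lemma td_pos : 0 < m. Proof. by case: td_tree. Qed.
Definition rt : 'I_m := Ordinal td_pos.
Definition tp (u : T) := top rt td_tree (fun i => u \in B i).

Lemma tp_in u : u \in B (tp u).
Proof.
case: td => _ cov _ _; have [i ui] := cov u.
by case: (top_spec rt td_tree (P := fun i => u \in B i)); first by exists i.
Qed.

Lemma tp_edge u v : e u v -> v \in B (tp u) \/ u \in B (tp v).
Proof.
case: td => _ cov ed conn euv.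
have [i /andP [ui vi]] := ed u v euv.
have exu : exists i, u \in B i by exists i.
have exv : exists i, v \in B i by exists i.
have cu := conn u; have cv := conn v.
have du := top_desc rt td_tree cu exu ui.
have dv := top_desc rt td_tree cv exv vi.
case/andP: du => leu /eqP itu; case/andP: dv => lev /eqP itv.
case: (leqP (depth rt td_tree (tp v)) (depth rt td_tree (tp u))) => H.
- left; rewrite /tp -itu.
  apply: (chain cv exv vi); rewrite -/(tp u) -/(tp v) in leu lev itu itv *; lia.
- right; rewrite /tp -itv.
  apply: (chain cu exu ui); rewrite -/(tp u) -/(tp v) in leu lev itu itv *; lia.
Qed.


Lemma card_sumb (A : {set T}) : #|A| = \sum_x (x \in A : nat).
Proof. by rewrite -sum1_card big_mkcond; apply: eq_bigr => x _; case: (x \in A). Qed.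

Lemma deg_sum w : irreflexive e -> td_width B = w -> \sum_u deg e u <= 2 * (#|T| * w).
Proof.
move=> eirr tw.
have bag i : #|B i| <= w.+1.
  have := leq_bigmax (F := fun i => #|B i|) i; move: tw; rewrite /td_width => tw H; apply: leq_trans H _; rewrite -tw; exact: leqSpred.
have aw u : #|B (tp u) :\ u| <= w.
  have := cardsD1 u (B (tp u)); rewrite tp_in; have := bag (tp u); lia.
pose b u := #|[set x | u \in B (tp x) :\ x]|.
have dle u : deg e u <= #|B (tp u) :\ u| + b u.
  have sub : [set x | e u x] \subset (B (tp u) :\ u) :|: [set x | u \in B (tp x) :\ x].
    apply/subsetP => x; rewrite !inE => eux.
    have ux : x != u by apply/eqP => xu; rewrite xu eirr in eux.
    case: (tp_edge eux) => H; first by rewrite H ux.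
    by rewrite H (eq_sym u x) ux orbT.
  apply: leq_trans (subset_leq_card sub) _; rewrite cardsU; exact: leq_subr.
have S1 : \sum_u deg e u <= \sum_u (#|B (tp u) :\ u| + b u) by apply: leq_sum => u _; exact: dle.
apply: (leq_trans S1); rewrite big_split /=.
have sa : \sum_u #|B (tp u) :\ u| <= #|T| * w.
  have S2 : \sum_u #|B (tp u) :\ u| <= \sum_(u : T) w by apply: leq_sum => u _; exact: aw.
  by apply: (leq_trans S2); rewrite sum_nat_const.
have sb : \sum_u b u = \sum_u #|B (tp u) :\ u|.
  rewrite /b; under eq_bigr => u _ do rewrite card_sumb.
  rewrite exchange_big /=; apply: eq_bigr => x _; rewrite card_sumb; apply: eq_bigr => u _.
  by rewrite inE.
rewrite sb; apply: leq_trans (leq_add sa sa) _; by rewrite mul2n -addnn.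
Qed.

End Decomp.

Unset Implicit Arguments. Set Strict Implicit. Set Printing Implicit Defensive.

Theorem theorem2 (T : finType) (e : rel T) (w : nat) :
  simple_graph e ->
  treewidth_eq e w ->
  (forall u v, u != v -> ~~ compl_graph e u v ->
     deg (compl_graph e) u + deg (compl_graph e) v < #|T|) ->
  forall d, nd_eq (compl_graph e) d ->
  d <= 2 ^ (2 * (w ^ 2 + w)) + 2 * (w ^ 2 + w).
Proof.
move=> [esym eirr] [[m [f [B [td tw]]]] _] hyp d [_ dmin].
set k := 2 * (w ^ 2 + w).
case: (leqP #|T| (2 ^ k + k)) => [small|big].
  apply: leq_trans small.
  apply: (dmin _ (@enum_rank T)) => v v' /enum_rank_inj ->; done.
have degc u : deg (compl_graph e) u + deg e u + 1 = #|T|.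
  rewrite /deg; have -> : [set x | compl_graph e u x] = ~: (u |: [set x | e u x]).
    apply/setP => x; rewrite !inE /compl_graph negb_or eq_sym; done.
  have := cardsC (u |: [set x | e u x]).
  rewrite cardsU1 inE eirr /=; lia.
pose S := [set u | #|T| - 1 <= 2 * deg e u].
have cover u v : e u v -> (u \in S) || (v \in S).
  move=> euv; have uv : u != v by apply/eqP => E; rewrite E eirr in euv.
  have nc : ~~ compl_graph e u v by rewrite /compl_graph euv andbF.
  have := hyp u v uv nc.
  have := degc u; have := degc v; rewrite !inE; lia.
have sumb := deg_sum td eirr tw.
have Sb : #|S| * (#|T| - 1) <= 4 * (#|T| * w).
  have H1 : \sum_(u in S) (#|T| - 1) <= \sum_(u in S) 2 * deg e u.
    by apply: leq_sum => u; rewrite inE.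
  have H2 : \sum_(u in S) 2 * deg e u <= \sum_u 2 * deg e u.
    by rewrite [X in _ <= X](bigID (mem S)) /= leq_addr.
  rewrite sum_nat_const in H1.
  have H3 : \sum_u 2 * deg e u = 2 * \sum_u deg e u by rewrite big_distrr.
  lia.
have kw : 4 * w <= k by rewrite /k; nia.
have pk : 0 < 2 ^ k by rewrite expn_gt0.
have Sk : #|S| <= k.
  suff : #|S| <= 4 * w by lia.
  have nb : 4 * w + 1 < #|T| by lia.
  nia.
pose code u : T + {set T} := if u \in S then inl u else inr ([set x | e u x] :&: S).
pose Cset := code @: [set: T].
pose Ct := {x : T + {set T} | x \in Cset}.
pose c u : 'I_#|{: Ct}| := enum_rank (exist (fun x => x \in Cset) (code u) (imset_f code (in_setT u))).
have Hc : nd_partition (compl_graph e) c.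
  move=> u v /enum_rank_inj /(congr1 val) /=; rewrite /code.
  case uS: (u \in S); case vS: (v \in S) => //.
    by case=> ->.
  case=> NE.
  have NS y : y \notin S -> forall x, e y x = (x \in [set x | e y x] :&: S).
    move=> yS x; rewrite !inE; case eyx: (e y x) => //=.
    by have := cover y x eyx; rewrite (negbTE yS) /= inE => ->.
  have eN z : e u z = e v z by rewrite (NS u (negbT uS)) (NS v (negbT vS)) NE.
  apply/setP => z; rewrite !inE /compl_graph eN.
  by case: (eqVneq z u); case: (eqVneq z v) => // -> ->.
have := dmin _ c Hc; rewrite card_sig => dle.
apply: leq_trans dle _.
have sub : Cset \subset [set inl x | x in S] :|: [set inr X | X in powerset S].
  apply/subsetP => x /imsetP [u _ ->]; rewrite /code in_setU.
  case uS: (u \in S); first by rewrite imset_f.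
  by rewrite orbC imset_f // powersetE subsetIr.
have cU := subset_leq_card sub.
have c1 : #|[set (inl x : T + {set T}) | x in S]| = #|S|.
  by rewrite card_imset // => ? ? [].
have c2 : #|[set (inr X : T + {set T}) | X in powerset S]| = 2 ^ #|S|.
  by rewrite card_imset ?card_powerset // => ? ? [].
rewrite cardsU c1 c2 in cU.
have e1 : 2 ^ #|S| <= 2 ^ k by apply: leq_pexp2l.
have -> : #|[pred x | x \in Cset]| = #|Cset| by [].
lia.
Qed.
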